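(* For all integers $L\ge1$ and $M\ge L+1$, $$\min_{w\in\mathbb{R}^L}\|Bw-\mathbf 1\|_2=\left[\frac{\binom{M+L+1}{L+1}}{\binom{M}{L+1}}-1\right]^{-1/2}.$$ Moreover, there exist absolute constants $0<c_1\le c_2$ such that for all integers $L\ge1$ and $M\ge L+1$, $$\exp\Big(c_1\frac{L^2}{M}\Big)\le\frac{\binom{M+L+1}{L+1}}{\binom{M}{L+1}}\le\exp\Big(c_2\frac{L^2}{M}\Big),$$ i.e. the minimum equals $\big[\exp(\Theta(L^2/M))-1\big]^{-1/2}$.
   Context: $B$ is the $M\times L$ real matrix with entries $B_{ij}=(i/M)^j$ for $1\le i\le M$, $1\le j\le L$; $\mathbf 1$ is the all-ones vector in $\mathbb{R}^M$; $\|\cdot\|_2$ is the Euclidean norm. *)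

(* Defs.v *)
From mathcomp Require Import all_boot all_order all_algebra.
From mathcomp Require Import all_classical all_reals all_analysis.
Set Implicit Arguments. Unset Strict Implicit. Unset Printing Implicit Defensive.
Import Order.TTheory GRing.Theory Num.Theory.
Local Open Scope ring_scope.

(* B is the M x L matrix with B_{ij} = (i/M)^j, 1 <= i <= M, 1 <= j <= L
   (0-based ordinals i, j stand for i+1, j+1). *)
Definition Bmat (R : realType) (M L : nat) : 'M[R]_(M, L) :=
  \matrix_(i < M, j < L) ((i.+1)%:R / M%:R) ^+ j.+1.

Definition ones (R : realType) (M : nat) : 'cV[R]_M := const_mx 1.

Definition norm2 (R : realType) (n : nat) (v : 'cV[R]_n) : R :=
  Num.sqrt (\sum_(i < n) v i 0 ^+ 2).

Definition binratio (R : realType) (M L : nat) : R :=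
  ('C(M + L + 1, L + 1))%:R / ('C(M, L + 1))%:R.

(* Main.v *)
Require Import Defs.
From mathcomp Require Import all_boot all_order all_algebra.
From mathcomp Require Import all_classical all_reals all_analysis.
From mathcomp Require Import ring lra zify.
Set Implicit Arguments. Unset Strict Implicit. Unset Printing Implicit Defensive.
Import Order.TTheory GRing.Theory Num.Theory.
Local Open Scope ring_scope.

Definition Ag (R : realFieldType) (L : nat) (F : nat -> R) : R :=
  \sum_(k < L.+1) ((-1) ^+ k * ('C(L, k))%:R) * F k.

Lemma Ag_S (R : realFieldType) (L : nat) (F : nat -> R) :
  Ag L.+1 F = Ag L (fun k => F k - F k.+1).
Proof.
rewrite /Ag big_ord_recl /= bin0 expr0 !mul1r.
under eq_bigr => i _ do rewrite /bump /= binS natrD mulrDr mulrDl exprS.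
rewrite big_split /=.
rewrite [X in _ = X](eq_bigr (fun k : 'I_L.+1 => (-1) ^+ k * ('C(L, k))%:R * F k
    - (-1) ^+ k * ('C(L, k))%:R * F k.+1)); last by move=> i _; rewrite mulrBr.
rewrite sumrB addrA; congr (_ + _).
  rewrite (big_ord_recr L) /= bin_small // mulr0 mul0r addr0.
  rewrite [in RHS]big_ord_recl /= bin0 expr0 !mul1r; congr (_ + _).
  by apply: eq_bigr => i _; rewrite exprS /bump /= add1n.
rewrite -sumrN; apply: eq_bigr => i _; rewrite /bump /= add1n mulN1r !mulNr //.
Qed.

Lemma Ag_S2 (R : realFieldType) (L : nat) (F : nat -> R) :
  Ag L.+1 F = Ag L F - Ag L (fun k => F k.+1).
Proof. by rewrite Ag_S /Ag -sumrB; apply: eq_bigr => i _; rewrite mulrBr. Qed.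

Definition nb (R : realFieldType) (a : R) (p : {poly R}) : {poly R} :=
  p - (p \Po ('X + a%:P)).

Lemma size_nb (R : realFieldType) (a : R) (p : {poly R}) :
  (size (nb a p) <= (size p).-1)%N.
Proof.
rewrite /nb; have [sp1|sp1] := leqP (size p) 1.
  have [c ->] : exists c, p = c%:P by exists p`_0; apply/size1_polyC.
  by rewrite comp_polyC subrr size_poly0.
have hs : size (p \Po ('X + a%:P)) = size p by rewrite size_comp_poly2 // size_XaddC.
have hl : lead_coef (p \Po ('X + a%:P)) = lead_coef p.
  by rewrite lead_coef_comp ?size_XaddC // lead_coefXaddC expr1n mulr1.
apply/leq_sizeP => j hj; rewrite coefB.
have [->|hne] := eqVneq j (size p).-1.
  by move: hl; rewrite !lead_coefE hs => ->; rewrite subrr.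
have hj2 : (size p <= j)%N by move: hj hne sp1; lia.
by rewrite !nth_default ?subrr // hs.
Qed.

Lemma Ag_ext (R : realFieldType) L (F G : nat -> R) :
  (forall k, F k = G k) -> Ag L F = Ag L G.
Proof. by move=> h; rewrite /Ag; apply: eq_bigr => k _; rewrite h. Qed.

Lemma Ag0 (R : realFieldType) (F : nat -> R) : Ag 0 F = F 0%N.
Proof. by rewrite /Ag big_ord1 /= expr0 bin0 !mul1r. Qed.

Lemma iter_nb_eval (R : realFieldType) (a : R) L p x :
  (iter L (nb a) p).[x] = Ag L (fun k => p.[x + k%:R * a]).
Proof.
elim: L p => [|L IH] p; first by rewrite Ag0 /= mul0r addr0.
rewrite iterSr IH Ag_S; apply: eq_bigr => k _; congr (_ * _).
rewrite /nb hornerD hornerN horner_comp !hornerE.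
by rewrite -natr1 mulrDl mul1r addrA.
Qed.

Lemma size_iter_nb (R : realFieldType) (a : R) L p :
  (size (iter L (nb a) p) <= size p - L)%N.
Proof.
elim: L => [|L IH]; first by rewrite subn0.
rewrite iterS; apply: (leq_trans (size_nb _ _)).
by rewrite subnS; move: IH; lia.
Qed.

Lemma Ag_poly (R : realFieldType) L (p : {poly R}) (j : R) :
  (size p <= L)%N -> Ag L (fun k => p.[j + k%:R]) = 0.
Proof.
move=> hs.
rewrite (@Ag_ext _ _ _ (fun k : nat => p.[j + k%:R * 1])); last by move=> k; rewrite mulr1.
rewrite -iter_nb_eval.
have : (size (iter L (nb 1) p) <= 0)%N.
  by apply: (leq_trans (size_iter_nb _ _ _)); move: hs; lia.
by rewrite leqn0 size_poly_eq0 => /eqP ->; rewrite horner0.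
Qed.

Lemma Ag_inv (R : realFieldType) L (j : R) : 0 < j ->
  Ag L (fun k => (j + k%:R)^-1) = L`!%:R / \prod_(t < L.+1) (j + t%:R).
Proof.
elim: L j => [|L IH] j hj.
  by rewrite Ag0 big_ord1 addr0 fact0 mul1r.
have hpos : forall (y : R) n, 0 < y -> 0 < \prod_(t < n) (y + t%:R).
  move=> y n hy; apply: prodr_gt0 => t _; apply: ltr_wpDr => //; exact: ler0n.
rewrite Ag_S2 IH //.
rewrite (@Ag_ext _ _ (fun k => (j + k.+1%:R)^-1) (fun k : nat => ((j + 1) + k%:R)^-1)); last first.
  by move=> k; rewrite -natr1 addrA addrAC.
rewrite IH; last by apply: ltr_wpDr.
set a := \prod_(t < L.+1) (j + t%:R).
set b := \prod_(t < L.+1) (j + 1 + t%:R).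
have ea : \prod_(t < L.+2) (j + t%:R) = a * (j + L.+1%:R) by rewrite big_ord_recr.
have eb : \prod_(t < L.+2) (j + t%:R) = j * b.
  rewrite big_ord_recl addr0; congr (_ * _); apply: eq_bigr => t _.
  by rewrite lift0 -natr1 addrA addrAC.
have ha : 0 < a by apply: hpos.
have hb : 0 < b by apply: hpos; apply: ltr_wpDr.
rewrite factS natrM.
have hjL : 0 < j + L.+1%:R by apply: ltr_wpDr.
have : a * (j + L.+1%:R) = j * b by rewrite -ea -eb.
rewrite ea => E.
rewrite -natr1 in E hjL *.
have hj0 : j != 0 by rewrite gt_eqF.
have hb' : b = a * (j + (L%:R + 1)) / j by rewrite E mulrC mulKf.
rewrite hb'; field.
by rewrite !gt_eqF.
Qed.

Lemma poly_eval_inj (R : realFieldType) (p q : {poly R}) :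
  (forall x, p.[x] = q.[x]) -> p = q.
Proof.
move=> h; apply/eqP; rewrite -subr_eq0; apply/negPn/negP => hne.
pose rs := [seq (i%:R : R) | i <- iota 0 (size (p - q))].
have H1 : all (root (p - q)) rs.
  by apply/allP => x _; rewrite /root !hornerE h subrr.
have H2 : uniq rs.
  by rewrite map_inj_uniq ?iota_uniq // => m n /eqP; rewrite eqr_nat => /eqP.
by have := max_poly_roots hne H1 H2; rewrite size_map size_iota ltnn.
Qed.

Lemma size_prod_lin (R : realFieldType) n (F : 'I_n -> {poly R}) :
  (forall i, size (F i) <= 2)%N -> (size (\prod_(i < n) F i)%R <= n.+1)%N.
Proof.
elim: n F => [|n IH] F hF; first by rewrite big_ord0 size_poly1.
rewrite big_ord_recr /=; apply: (leq_trans (size_polyMleq _ _)).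
have := IH (fun i => F (widen_ord (leqnSn n) i)) (fun i => hF _).
move=> h1; have h2 := hF ord_max; move: h1 h2.
set x := size _; set y := size (F ord_max); lia.
Qed.

Definition P1f (R : realFieldType) (L : nat) (x : R) := \prod_(t < L.+1) (x + t%:R).
Definition P2f (R : realFieldType) (L M : nat) (x : R) := \prod_(t < L) (M%:R - t%:R - x).
Definition Uf (R : realFieldType) (L M : nat) (x : R) := P1f L x * P2f L M x.
Definition Df (R : realFieldType) (L M : nat) (x : R) := Ag L (fun k => Uf L M (x - k%:R)).

Definition Up (R : realFieldType) (L M : nat) : {poly R} :=
  (\prod_(t < L.+1) ('X + (t%:R)%:P)) * (\prod_(t < L) ((M%:R - t%:R)%:P - 'X)).

Definition Rk (R : realFieldType) (L M k : nat) : {poly R} :=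
  (\prod_(t < L.+1 | (t : nat) != k) ('X + (t%:R - k%:R)%:P)) *
  (\prod_(t < L) ((M%:R - t%:R + k%:R)%:P - 'X)).

Definition Qp (R : realFieldType) (L M : nat) : {poly R} :=
  \sum_(k < L.+1) ((-1) ^+ k * ('C(L, k))%:R) *: Rk R L M k.

Lemma Up_eval (R : realFieldType) L M (x : R) : (Up R L M).[x] = Uf L M x.
Proof.
rewrite /Up /Uf /P1f /P2f hornerM !horner_prod; congr (_ * _);
  apply: eq_bigr => t _; rewrite !hornerE //.
Qed.

Lemma Rk_eval (R : realFieldType) L M (k : nat) (x : R) : (k <= L)%N ->
  (Rk R L M k).[x] * x = Uf L M (x - k%:R).
Proof.
move=> hk; rewrite /Rk /Uf /P1f /P2f hornerM !horner_prod.
rewrite [in RHS](bigD1 (Ordinal (hk : (k < L.+1)%N))) //= subrK.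
set A := \prod_(i < L.+1 | _) (x - k%:R + i%:R).
set B := \prod_(t < L) (M%:R - t%:R - _).
have -> : \prod_(i < L.+1 | (i : nat) != k) ('X + (i%:R - k%:R)%:P).[x] = A.
  apply: eq_big => t; first by rewrite -val_eqE.
  by move=> _; rewrite hornerD hornerX hornerC addrA addrAC.
have -> : \prod_(i < L) ((M%:R - i%:R + k%:R)%:P - 'X).[x] = B.
  by apply: eq_bigr => t _; rewrite hornerD hornerN hornerX hornerC; ring.
ring.
Qed.

Lemma Qp_X (R : realFieldType) L M (x : R) : (Qp R L M).[x] * x = Df L M x.
Proof.
rewrite /Qp /Df /Ag horner_sum mulr_suml; apply: eq_bigr => k _.
by rewrite hornerZ -mulrA Rk_eval // -ltnS.
Qed.

Lemma size_Up (R : realFieldType) L M : (size (Up R L M) <= (L + L).+2)%N.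
Proof.
rewrite /Up; apply: (leq_trans (size_polyMleq _ _)).
have h1 := @size_prod_lin R L.+1 (fun t => 'X + (t%:R)%:P) (fun t => eq_leq (size_XaddC _)).
have h2 := @size_prod_lin R L (fun t => (M%:R - t%:R)%:P - 'X).
have h2' : forall t : 'I_L, (size ((M%:R - t%:R)%:P - 'X : {poly R})%R <= 2)%N.
  move=> t; apply: (leq_trans (size_polyD _ _)).
  by rewrite size_polyN size_polyX geq_max (leq_trans (size_polyC_leq1 _)).
move: (h2 h2') h1; set a := size _; set b := size _; lia.
Qed.

Lemma size_Qp (R : realFieldType) L M : (size (Qp R L M) <= L.+1)%N.
Proof.
have E : Qp R L M * 'X = iter L (nb (-1)) (Up R L M).
  apply: poly_eval_inj => x; rewrite hornerMX Qp_X iter_nb_eval /Df.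
  by apply: Ag_ext => k; rewrite Up_eval mulrN1.
have hs : (size (Qp R L M * 'X)%R <= L.+2)%N.
  rewrite E; apply: (leq_trans (size_iter_nb _ _ _)).
  have := size_Up R L M; lia.
have [->|hne] := eqVneq (Qp R L M) 0; first by rewrite size_poly0.
by move: hs; rewrite size_mulX.
Qed.

Lemma prod_shift (R : realFieldType) k :
  \prod_(t < k) ((t%:R : R) - k%:R) = (-1) ^+ k * k`!%:R.
Proof.
elim: k => [|k IH]; first by rewrite big_ord0 expr0 mulr1.
rewrite big_ord_recl /= sub0r.
rewrite (eq_bigr (fun t : 'I_k => (t%:R : R) - k%:R)); last first.
  by move=> t _; rewrite /bump /= add1n -!natr1; ring.
by rewrite IH factS natrM exprS; ring.
Qed.

Lemma prod_neq (R : realFieldType) k L : (k <= L)%N ->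
  \prod_(t < L.+1 | (t : nat) != k) ((t%:R : R) - k%:R) =
  (-1) ^+ k * k`!%:R * (L - k)`!%:R.
Proof.
elim: L => [|L IH] hk.
  have -> : k = 0%N by move: hk; lia.
  by rewrite big_mkcond big_ord1 /= fact0 expr0 !mulr1.
rewrite big_mkcond big_ord_recr /=.
have [ek|nk] := eqVneq k L.+1.
  rewrite /= mulr1 ek subnn fact0 mulr1 -(prod_shift R L.+1).
  apply: eq_bigr => t _ /=; rewrite ifT //.
  by apply/negP => /eqP ht; have := ltn_ord t; rewrite ht ltnn.
have hk' : (k <= L)%N by move: hk nk; lia.
rewrite /= -big_mkcond /= IH // subSn // factS natrM -subSn // natrB //; ring.
Qed.

Lemma Qp0 (R : realFieldType) L M :
  (Qp R L M).[0] = L`!%:R * \sum_(k < L.+1) \prod_(t < L) (M%:R + k%:R - t%:R : R).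
Proof.
rewrite /Qp horner_sum mulr_sumr; apply: eq_bigr => k _.
have hk : (k <= L)%N by rewrite -ltnS.
rewrite hornerZ /Rk hornerM !horner_prod.
rewrite (eq_bigr (fun t : 'I_L.+1 => (t%:R : R) - k%:R)); last first.
  by move=> t _; rewrite hornerD hornerX hornerC add0r.
rewrite prod_neq //.
rewrite (eq_bigr (fun t : 'I_L => (M%:R + k%:R - t%:R : R))); last first.
  by move=> t _; rewrite hornerD hornerN hornerX hornerC subr0; ring.
rewrite -(bin_fact hk) !natrM.
have e : (-1) ^+ k * (-1) ^+ k = 1 :> R by rewrite -exprMn mulrNN mulr1 expr1n.
set P := \prod_(t < L) _.
transitivity (((-1) ^+ k * (-1) ^+ k) * ('C(L,k)%:R * (k`!%:R * (L-k)`!%:R)) * P : R); first by ring.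
by rewrite e mul1r.
Qed.

Lemma U_lo (R : realFieldType) L M (y : R) n : (n <= L)%N -> y + n%:R = 0 -> Uf L M y = 0.
Proof.
move=> hn hy; rewrite /Uf /P1f (bigD1 (Ordinal (hn : (n < L.+1)%N))) //= hy.
by rewrite !mul0r.
Qed.

Lemma U_hi (R : realFieldType) L M (y : R) n : (n < L)%N -> y + n%:R = M%:R -> Uf L M y = 0.
Proof.
move=> hn hy; rewrite /Uf /P2f (bigD1 (Ordinal hn)) //=.
have -> : (M%:R - n%:R - y : R) = 0 by rewrite -hy; ring.
by rewrite mul0r mulr0.
Qed.

Lemma sbp_k (R : realFieldType) L M (h : R -> R) k : (L < M)%N -> (k <= L)%N ->
  \sum_(i < M) Uf L M (i.+1%:R - k%:R) * h i.+1%:R =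
  \sum_(m < M - L) Uf L M (m.+1%:R) * h (m.+1%:R + k%:R).
Proof.
move=> hLM hk.
rewrite -(big_mkord xpredT (fun i => Uf L M (i.+1%:R - k%:R) * h i.+1%:R)).
rewrite (@big_cat_nat _ _ _ k) /=; [|by []|by lia].
rewrite (@big_cat_nat _ _ _ (k + (M - L)) k) /=; [|by lia|by lia].
rewrite big1_seq ?add0r; last first.
  move=> i /andP [_]; rewrite mem_index_iota => /andP [_ hi].
  rewrite (@U_lo R L M _ (k - i.+1)) ?mul0r //; first by lia.
  by rewrite natrB //; ring.
rewrite [X in _ + X]big1_seq ?addr0; last first.
  move=> i /andP [_]; rewrite mem_index_iota => /andP [hi1 hi2].
  rewrite (@U_hi R L M _ (M + k - i.+1)) ?mul0r //; first by lia.
  rewrite natrB; last by lia.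
  by rewrite natrD; ring.
rewrite -{1}(add0n k) big_addn.
have -> : (k + (M - L) - k = M - L)%N by lia.
rewrite big_mkord; apply: eq_bigr => m _.
rewrite -addSn natrD addrK; congr (_ * h _); by rewrite natrD.
Qed.

Lemma sbp (R : realFieldType) L M (h : R -> R) : (L < M)%N ->
  \sum_(i < M) Df L M (i.+1%:R) * h i.+1%:R =
  \sum_(m < M - L) Uf L M (m.+1%:R) * Ag L (fun k => h (m.+1%:R + k%:R)).
Proof.
move=> hLM; rewrite /Df /Ag.
rewrite (eq_bigr (fun i : 'I_M => \sum_(k < L.+1) ((-1) ^+ k * ('C(L, k))%:R) *
   (Uf L M (i.+1%:R - k%:R) * h i.+1%:R))); last first.
  by move=> i _; rewrite mulr_suml; apply: eq_bigr => k _; rewrite !mulrA.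
rewrite [X in _ = X](eq_bigr (fun m : 'I_(M - L) => \sum_(k < L.+1) ((-1) ^+ k * ('C(L, k))%:R) *
   (Uf L M (m.+1%:R) * h (m.+1%:R + k%:R)))); last first.
  by move=> m _; rewrite mulr_sumr; apply: eq_bigr => k _; rewrite mulrCA.
rewrite exchange_big [in RHS]exchange_big; apply: eq_bigr => k _.
by rewrite -!mulr_sumr sbp_k // -ltnS.
Qed.

Lemma orth_mono (R : realFieldType) L M j : (L < M)%N -> (j < L)%N ->
  \sum_(i < M) (Qp R L M).[i.+1%:R] * (i.+1%:R) ^+ j.+1 = 0.
Proof.
move=> hLM hj.
rewrite (eq_bigr (fun i : 'I_M => Df L M i.+1%:R * (fun x : R => x ^+ j) i.+1%:R)); last first.
  by move=> i _; rewrite -Qp_X exprS mulrA.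
rewrite (@sbp R L M (fun x : R => x ^+ j)) //; apply: big1 => m _.
rewrite (@Ag_ext _ _ _ (fun k => ('X^j : {poly R}).[m.+1%:R + k%:R])); last first.
  by move=> k; rewrite hornerXn.
by rewrite Ag_poly ?mulr0 // size_polyXn.
Qed.

Lemma sum_v (R : realFieldType) L M : (L < M)%N ->
  \sum_(i < M) (Qp R L M).[i.+1%:R] = L`!%:R * \sum_(m < M - L) P2f L M (m.+1%:R).
Proof.
move=> hLM.
rewrite (eq_bigr (fun i : 'I_M => Df L M i.+1%:R * (fun x : R => x^-1) i.+1%:R)); last first.
  by move=> i _; rewrite -Qp_X mulfK // pnatr_eq0.
rewrite (@sbp R L M (fun x : R => x^-1)) // mulr_sumr; apply: eq_bigr => m _.
rewrite Ag_inv ?ltr0Sn // /Uf.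
have hP : P1f L (m.+1%:R : R) != 0.
  rewrite /P1f prodf_seq_neq0; apply/allP => t _ /=.
  by rewrite -natrD pnatr_eq0 addSn.
rewrite /P1f in hP *; set P := \prod_(t < L.+1) _.
by field.
Qed.

Lemma hockey M L K : ('C(M, L.+1) + \sum_(k < K) 'C(M + k, L) = 'C(M + K, L.+1))%N.
Proof.
elim: K => [|K IH]; first by rewrite big_ord0 addn0 addn0.
by rewrite big_ord_recr /= addnA IH addnS binS addnC.
Qed.

Lemma P2f_nat (R : realFieldType) L M m : (m < M - L)%N ->
  P2f L M (m.+1%:R : R) = ((M - m.+1) ^_ L)%:R.
Proof.
move=> hm; rewrite /P2f ffact_prod natr_prod; apply: eq_bigr => t _.
have ht := ltn_ord t.
rewrite !natrB; [ring | lia | lia].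
Qed.

Lemma c_nat (R : realFieldType) L M k : (L <= M)%N ->
  \prod_(t < L) (M%:R + k%:R - t%:R : R) = ((M + k) ^_ L)%:R.
Proof.
move=> hm; rewrite ffact_prod natr_prod; apply: eq_bigr => t _.
have ht := ltn_ord t.
rewrite natrB ?natrD //; lia.
Qed.

Lemma S_closed (R : realFieldType) L M : (L < M)%N ->
  \sum_(i < M) (Qp R L M).[i.+1%:R] = L`!%:R * L`!%:R * ('C(M, L.+1))%:R.
Proof.
move=> hLM; rewrite sum_v // -mulrA; congr (_ * _).
rewrite (eq_bigr (fun m : 'I_(M - L) => ((M - m.+1) ^_ L)%:R)); last first.
  by move=> m _; rewrite P2f_nat.
rewrite -natr_sum -natrM; congr (_ %:R).
rewrite (eq_bigr (fun m : 'I_(M - L) => 'C(M - m.+1, L) * L`!))%N; last first.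
  by move=> m _; rewrite bin_ffact.
rewrite -big_distrl /= mulnC; congr (_ * _)%N.
rewrite -(big_mkord xpredT (fun m => 'C(M - m.+1, L))).
rewrite big_rev_mkord subn0.
rewrite (eq_bigr (fun k : 'I_(M - L) => 'C(L + k, L))); last first.
  move=> k _; congr 'C(_, _); have := ltn_ord k; lia.
have := hockey L L (M - L); rewrite bin_small // add0n => ->.
by congr 'C(_, _); lia.
Qed.

Lemma c_closed (R : realFieldType) L M : (L <= M)%N ->
  (Qp R L M).[0] = L`!%:R * L`!%:R * (\sum_(k < L.+1) 'C(M + k, L))%:R.
Proof.
move=> hLM; rewrite Qp0 -mulrA; congr (_ * _).
rewrite (eq_bigr (fun k : 'I_L.+1 => ((M + k) ^_ L)%:R)); last first.
  by move=> k _; rewrite c_nat.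
rewrite natr_sum mulr_sumr; apply: eq_bigr => k _.
by rewrite -bin_ffact natrM mulrC.
Qed.

Lemma q_expand (R : realFieldType) L M (x : R) :
  (Qp R L M).[x] = (Qp R L M).[0] + \sum_(j < L) (Qp R L M)`_j.+1 * x ^+ j.+1.
Proof.
by rewrite (horner_coef_wide _ (size_Qp R L M)) big_ord_recl horner_coef0 expr0 mulr1.
Qed.

Lemma Bmul (R : realType) M L (u : 'cV[R]_L) (i : 'I_M) :
  (Bmat R M L *m u) i 0 = \sum_(j < L) ((i.+1)%:R / M%:R) ^+ j.+1 * u j 0.
Proof. by rewrite !mxE; apply: eq_bigr => j _; rewrite mxE. Qed.

Lemma orthB (R : realType) L M (u : 'cV[R]_L) : (L < M)%N ->
  \sum_(i < M) (Qp R L M).[i.+1%:R] * (Bmat R M L *m u) i 0 = 0.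
Proof.
move=> hLM.
under eq_bigr => i _ do rewrite Bmul mulr_sumr.
rewrite exchange_big /=; apply: big1 => j _.
rewrite (eq_bigr (fun i : 'I_M => (u j 0 / M%:R ^+ j.+1) * ((Qp R L M).[i.+1%:R] * (i.+1%:R) ^+ j.+1))); last first.
  by move=> i _; rewrite exprMn exprVn; ring.
by rewrite -mulr_sumr orth_mono ?mulr0.
Qed.

Lemma sum_vsq (R : realFieldType) L M : (L < M)%N ->
  \sum_(i < M) (Qp R L M).[i.+1%:R] ^+ 2 =
  (Qp R L M).[0] * \sum_(i < M) (Qp R L M).[i.+1%:R].
Proof.
move=> hLM; rewrite mulr_sumr.
apply/eqP; rewrite -subr_eq0 -sumrB; apply/eqP.
rewrite (eq_bigr (fun i : 'I_M => \sum_(j < L) (Qp R L M)`_j.+1 * ((Qp R L M).[i.+1%:R] * (i.+1%:R) ^+ j.+1))); last first.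
  move=> i _; rewrite expr2 -mulrBl {1}q_expand addrC addKr mulr_suml.
  by apply: eq_bigr => j _; ring.
rewrite exchange_big /=; apply: big1 => j _.
by rewrite -mulr_sumr orth_mono ?mulr0.
Qed.

Lemma part1 (R : realType) L M : (1 <= L)%N -> (L + 1 <= M)%N ->
  (exists w : 'cV[R]_L,
     norm2 (Bmat R M L *m w - ones R M) = (Num.sqrt (binratio R M L - 1))^-1) /\
  (forall w : 'cV[R]_L,
     (Num.sqrt (binratio R M L - 1))^-1 <= norm2 (Bmat R M L *m w - ones R M)).
Proof.
move=> hL hLM1; have hLM : (L < M)%N by lia.
set q := Qp R L M; set c := q.[0]; set S := \sum_(i < M) q.[i.+1%:R].
set T := (\sum_(k < L.+1) 'C(M + k, L))%N.
set C0 := 'C(M, L.+1).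
have hT : (0 < T)%N.
  rewrite /T big_ord_recl /= addn0.
  have h0 : (0 < 'C(M, L))%N by rewrite bin_gt0 ltnW.
  move: h0; set s := (\sum_(i < L) _)%N; lia.
have hC0 : (0 < C0)%N by rewrite bin_gt0.
set f : R := L`!%:R * L`!%:R.
have fpos : 0 < f by rewrite mulr_gt0 // ltr0n fact_gt0.
have hc : c = f * T%:R by rewrite /c /q c_closed //; lia.
have hS : S = f * C0%:R by rewrite /S /q S_closed.
have cpos : 0 < c by rewrite hc mulr_gt0 // ltr0n.
have c0 : c != 0 by rewrite gt_eqF.
have hr : binratio R M L - 1 = T%:R / C0%:R.
  rewrite /binratio !addn1 -addnS -(hockey M L L.+1) natrD -/T -/C0.
  have : (C0%:R : R) != 0 by rewrite pnatr_eq0 -lt0n.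
  by move=> h; field.
have target : (Num.sqrt (binratio R M L - 1))^-1 = Num.sqrt (S / c).
  rewrite hr -sqrtrV ?divr_ge0 ?ler0n // invf_div hS hc; congr (Num.sqrt _).
  by field; rewrite !gt_eqF // ltr0n.
rewrite target.
pose ws : 'cV[R]_L := \col_(j < L) (- q`_j.+1 * M%:R ^+ j.+1 / c).
have M0 : (M%:R : R) != 0 by rewrite pnatr_eq0; lia.
have Bw : forall i : 'I_M, (Bmat R M L *m ws) i 0 = 1 - q.[i.+1%:R] / c.
  move=> i; rewrite Bmul.
  rewrite (eq_bigr (fun j : 'I_L => - c^-1 * (q`_j.+1 * (i.+1%:R) ^+ j.+1))); last first.
    move=> j _; rewrite mxE exprMn exprVn; field; by rewrite c0 expf_neq0.
  have E := @q_expand R L M (i.+1%:R); rewrite -/q -/c in E.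
  rewrite -mulr_sumr.
  have -> : \sum_(j < L) q`_j.+1 * (i.+1%:R) ^+ j.+1 = q.[i.+1%:R] - c.
    by rewrite E addrC addKr.
  by field.
have key : forall w : 'cV[R]_L, \sum_(i < M) ((Bmat R M L *m w - ones R M) i 0) ^+ 2 =
    \sum_(i < M) ((Bmat R M L *m (w - ws)) i 0) ^+ 2 + S / c.
  move=> w.
  have e : forall i : 'I_M, (Bmat R M L *m w - ones R M) i 0 =
      (Bmat R M L *m (w - ws)) i 0 - q.[i.+1%:R] / c.
    move=> i; have := Bw i; rewrite mulmxBr !mxE => ->; ring.
  under eq_bigr => i _ do rewrite e.
  have O := @orthB R L M (w - ws) hLM; rewrite -/q in O.
  have V := @sum_vsq R L M hLM; rewrite -/q -/c -/S in V.
  set y := fun i : 'I_M => (Bmat R M L *m (w - ws)) i 0.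
  rewrite -/(y _) in O *.
  rewrite (eq_bigr (fun i : 'I_M => y i ^+ 2 + (c^-2 * (q.[i.+1%:R] ^+ 2) - (2 * c^-1) * (q.[i.+1%:R] * y i)))); last first.
    by move=> i _; rewrite /y; field.
  rewrite big_split sumrB -!mulr_sumr V O /=; field.
  exact: c0.
have hSc : 0 <= S / c by rewrite hS hc divr_ge0 // mulr_ge0 ?ler0n // ltW.
split.
  exists ws; rewrite /norm2 key subrr mulmx0.
  by rewrite big1 ?add0r // => i _; rewrite mxE expr0n.
move=> w; rewrite /norm2 key ler_sqrt; last first.
  by rewrite addr_ge0 // sumr_ge0 // => i _; rewrite sqr_ge0.
by rewrite lerDr sumr_ge0 // => i _; rewrite sqr_ge0.
Qed.

Lemma binratio_prod (R : realType) M L : (L + 1 <= M)%N ->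
  binratio R M L = \prod_(k < L.+1) ((M%:R + 1 + k%:R) / (M%:R - k%:R)).
Proof.
move=> hLM.
have f0 : ((L.+1)`!%:R : R) != 0 by rewrite pnatr_eq0 -lt0n fact_gt0.
have c0 : ('C(M, L.+1)%:R : R) != 0 by rewrite pnatr_eq0 -lt0n bin_gt0 -addn1.
rewrite /binratio !addn1.
have -> : ('C((M + L).+1, L.+1)%:R / 'C(M, L.+1)%:R : R) =
    ('C((M + L).+1, L.+1) * (L.+1)`!)%N%:R / ('C(M, L.+1) * (L.+1)`!)%N%:R.
  set F := (L.+1)`!; rewrite !natrM invfM mulrACA mulfV ?mulr1 // -natrM; exact: f0.
rewrite !bin_ffact prodf_div !ffact_prod !natr_prod.
congr (_ / _).
  rewrite [RHS](reindex_inj rev_ord_inj) /=; apply: eq_bigr => i _.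
  have hi := ltn_ord i.
  rewrite natrB; last by lia.
  rewrite natrB; last by lia.
  rewrite -!natr1 natrD; ring.
apply: eq_bigr => i _; have hi := ltn_ord i; rewrite natrB //; lia.
Qed.

Lemma exp_le_1p (R : realType) (z : R) : 0 <= z -> z <= 2/3 -> expR z <= 1 + 3 * z.
Proof.
move=> h0 h1.
have h := expR_ge1Dx (- z); rewrite expRN in h.
have ep := expR_gt0 z.
have h2 : (1 - z) * expR z <= 1.
  have : (1 - z) * expR z <= (expR z)^-1 * expR z by rewrite ler_pM2r.
  by rewrite mulVf ?gt_eqF.
have hz : 0 <= z * (2 - 3 * z) by rewrite mulr_ge0 //; lra.
nra.
Qed.

Lemma sum_odd (R : realType) n : \sum_(k < n) (2 * k%:R + 1 : R) = n%:R ^+ 2.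
Proof.
elim: n => [|n IH]; first by rewrite big_ord0 expr0n.
by rewrite big_ord_recr /= IH -natr1; ring.
Qed.

Lemma bin_le_exp n k : ('C(n, k) <= 2 ^ n)%N.
Proof.
elim: n k => [|n IH] [|k] //; first by rewrite bin0 expn_gt0.
by rewrite binS expnS mul2n -addnn leq_add.
Qed.

Lemma part2 (R : realType) : exists c1 c2 : R, 0 < c1 /\ c1 <= c2 /\
     forall L M : nat, (1 <= L)%N -> (L + 1 <= M)%N ->
       expR (c1 * (L%:R ^+ 2 / M%:R)) <= binratio R M L /\
       binratio R M L <= expR (c2 * (L%:R ^+ 2 / M%:R)).
Proof.
exists (1/3), 15; split; first by lra.
split; first by lra.
move=> L M hL hLM.
have hl : 1 <= L%:R :> R by rewrite ler1n.
have hm : L%:R + 1 <= M%:R :> R by rewrite -[1]/(1%:R) -natrD ler_nat.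
have mpos : 0 < M%:R :> R by lra.
have Fk : forall k : 'I_L.+1, 0 < M%:R - k%:R :> R /\
    (M%:R + 1 + k%:R) / (M%:R - k%:R) = 1 + (2 * k%:R + 1) / (M%:R - k%:R) :> R.
  move=> k; have hk : k%:R <= L%:R :> R by rewrite ler_nat -ltnS.
  have hpos : 0 < M%:R - k%:R :> R by lra.
  split => //; field; exact: lt0r_neq0.
have hk0 : forall k : 'I_L.+1, (0 <= k%:R :> R) && (k%:R <= L%:R :> R).
  by move=> k; rewrite ler0n ler_nat -ltnS ltn_ord.
split.
  rewrite binratio_prod // (@le_trans _ _ (expR (\sum_(k < L.+1) ((2 * k%:R + 1) / (3 * M%:R))))) //.
    rewrite ler_expR -mulr_suml sum_odd.
    have : L%:R ^+ 2 <= (L.+1)%:R ^+ 2 :> R by rewrite lerXn2r ?nnegrE ?ler0n // ler_nat.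
    move=> h.
    have -> : 1 / 3 * (L%:R ^+ 2 / M%:R) = L%:R ^+ 2 / (3 * M%:R) :> R by field; lra.
    by rewrite ler_pM2r // invr_gt0; lra.
  rewrite expR_sum; apply: ler_prod => k _; rewrite expR_ge0 /=.
  have [hp ->] := Fk k; have /andP [h0 h1] := hk0 k.
  apply: (@le_trans _ _ (1 + (2 * k%:R + 1) / M%:R)).
    have -> : (2 * k%:R + 1) / M%:R = 3 * ((2 * k%:R + 1) / (3 * M%:R)) :> R by field; lra.
    apply: exp_le_1p; first by rewrite divr_ge0 //; lra.
    rewrite ler_pdivrMr; last by lra.
    lra.
  rewrite lerD2l ler_wpM2l //.
  by rewrite lef_pV2 ?posrE //; lra.
have [hc|hc] := leqP (2 * L + 2) M.
  have hc' : 2 * L%:R + 2 <= M%:R :> R.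
    by rewrite -[2 : R]/(2%:R) -natrM -natrD ler_nat.
  rewrite binratio_prod // (@le_trans _ _ (expR (\sum_(k < L.+1) (2 * ((2 * k%:R + 1) / M%:R))))) //.
    rewrite expR_sum; apply: ler_prod => k _.
    have [hp ->] := Fk k; have /andP [h0 h1] := hk0 k.
    rewrite addr_ge0 ?divr_ge0 //=; try lra.
    apply: (le_trans (expR_ge1Dx _)); rewrite ler_expR -subr_ge0.
    have -> : 2 * ((2 * k%:R + 1) / M%:R) - (2 * k%:R + 1) / (M%:R - k%:R) =
       (2 * k%:R + 1) * (M%:R - 2 * k%:R) / (M%:R * (M%:R - k%:R)) :> R.
      by field; rewrite !gt_eqF.
    by rewrite divr_ge0 ?mulr_ge0 //; lra.
  have hL1 : (L.+1%:R : R) = L%:R + 1 by rewrite -natr1.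
  rewrite ler_expR -mulr_sumr -mulr_suml sum_odd hL1 -subr_ge0.
  have -> : 15 * (L%:R ^+ 2 / M%:R) - 2 * ((L%:R + 1) ^+ 2 / M%:R) =
      (15 * L%:R ^+ 2 - 2 * (L%:R + 1) ^+ 2) / M%:R :> R by field; rewrite gt_eqF.
  apply: divr_ge0; last by lra.
  have hl2 : 0 <= (L%:R - 1) * (L%:R - 1) :> R by rewrite mulr_ge0 //; lra.
  rewrite !expr2; nra.
have hc' : M%:R <= 2 * L%:R + 1 :> R.
  have : (M <= 2 * L + 1)%N by lia.
  by rewrite -(ler_nat R) natrD natrM.
have C0pos : 1 <= ('C(M, L + 1))%:R :> R by rewrite ler1n bin_gt0.
rewrite /binratio (@le_trans _ _ ('C(M + L + 1, L + 1))%:R) //.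
  by rewrite ler_pdivrMr ?ler_peMr //; lra.
rewrite (@le_trans _ _ ((2 : R) ^+ (5 * L))) //.
  rewrite -[2 : R]/(2%:R) -natrX ler_nat.
  apply: (leq_trans (bin_le_exp _ _)); apply: leq_pexp2l => //; lia.
have e1 : 2 <= expR 1 :> R by have := expR_ge1Dx (1 : R); lra.
rewrite (@le_trans _ _ (expR 1 ^+ (5 * L))) //.
  by rewrite lerXn2r ?nnegrE ?expR_ge0.
rewrite -expRM_natl ler_expR mulr1 -subr_ge0 natrM.
have -> : 15 * (L%:R ^+ 2 / M%:R) - 5%:R * L%:R = 5 * L%:R * (3 * L%:R - M%:R) / M%:R :> R.
  by field; rewrite gt_eqF.
by rewrite divr_ge0 ?mulr_ge0; lra.
Qed.


Theorem lemma1 (R : realType) :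
  (forall L M : nat, (1 <= L)%N -> (L + 1 <= M)%N ->
     (exists w : 'cV[R]_L,
        norm2 (Bmat R M L *m w - ones R M) = (Num.sqrt (binratio R M L - 1))^-1) /\
     (forall w : 'cV[R]_L,
        (Num.sqrt (binratio R M L - 1))^-1 <= norm2 (Bmat R M L *m w - ones R M))) /\
  (exists c1 c2 : R, 0 < c1 /\ c1 <= c2 /\
     forall L M : nat, (1 <= L)%N -> (L + 1 <= M)%N ->
       expR (c1 * (L%:R ^+ 2 / M%:R)) <= binratio R M L /\
       binratio R M L <= expR (c2 * (L%:R ^+ 2 / M%:R))).
Proof.
split; last exact: part2.
by move=> L M hL hLM; apply: part1.
Qed.
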